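(* Let $D \subset \mathbb{Z}^m \setminus \{\mathbf{0}\}$ be finite with $D = -D$, and let $F_D$ be the set of Laurent polynomials $f(z) = \sum_{d \in D} c_d z_1^{d_1}\cdots z_m^{d_m}$ with $c_{-d} = \overline{c_d}$ for all $d \in D$ and $\sum_{d \in D} |c_d|^2 = 1$, topologized via the coefficient vector $(c_d)_{d \in D}$. Then the function $f \mapsto \rho_-(f)$ is continuous on $F_D$.
   Context: $\lambda_m$ is the normalized Lebesgue measure on $\mathbb{T}^m$ ($\mathbb{T}$ the unit circle), with $\lambda_m(\mathbb{T}^m)=1$; such $f$ are real-valued on $\mathbb{T}^m$, and $\rho_-(f) = \lambda_m(\{z \in \mathbb{T}^m : f(z) < 0\})$. *)

(* Defs.v *)
From HB Require Import structures.
From mathcomp Require Import all_boot all_order all_algebra.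
From mathcomp Require Import finmap.
From mathcomp Require Import complex.
From mathcomp Require Import all_classical all_reals all_analysis.
Set Implicit Arguments. Unset Strict Implicit. Unset Printing Implicit Defensive.
Import Order.TTheory GRing.Theory Num.Theory.
Local Open Scope ring_scope.
Local Open Scope classical_set_scope.

Section Defs.
Variable R : realType.

(* Points of T^m are parametrized by angles theta in [0,1]^m via
   z_k = exp(2 pi i theta_k); only the coordinates 0..m-1 of
   theta : nat -> R are used. *)
Definition expi (x : R) : R[i] := (cos x +i* sin x)%C.

Definition torus_pt (m : nat) (theta : nat -> R) (k : 'I_m) : R[i] :=
  expi (2 * pi * theta k).

Fixpoint iter_int (n : nat) (g : (nat -> R) -> \bar R) : \bar R :=
  match n with
  | 0 => g (fun _ => 0)
  | n'.+1 =>
      (\int[lebesgue_measure]_(t in `[0%R, 1%R])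
         iter_int n' (fun x => g (fun k => if k == n' then t else x k)))%E
  end.

Definition torus_measure (m : nat) (A : set (nat -> R)) : \bar R :=
  iter_int m (fun theta => (\1_A theta)%:E).

Definition laurent_eval (m : nat) (D : {fset 'rV[int]_m})
    (c : 'rV[int]_m -> R[i]) (z : 'I_m -> R[i]) : R[i] :=
  \sum_(d <- D) c d * \prod_(k < m) (z k) ^ (d ord0 k).

Definition rho_neg (m : nat) (D : {fset 'rV[int]_m}) (c : 'rV[int]_m -> R[i])
  : \bar R :=
  torus_measure m [set theta | laurent_eval D c (torus_pt theta) < 0].

Definition in_FD (m : nat) (D : {fset 'rV[int]_m}) (c : 'rV[int]_m -> R[i])
  : Prop :=
  (forall d, d \in D -> c (- d) = (c d)^*) /\
  \sum_(d <- D) `|c d| ^+ 2 = 1.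

End Defs.

(* Main.v *)
Require Import Defs.
From HB Require Import structures.
From mathcomp Require Import all_boot all_order all_algebra.
From mathcomp Require Import finmap.
From mathcomp Require Import complex.
From mathcomp Require Import all_classical all_reals all_analysis.
From mathcomp Require Import measurable_realfun.
From mathcomp Require Import ring lra zify.
Import Order.TTheory GRing.Theory Num.Theory.
Local Open Scope ring_scope.
Set Implicit Arguments. Unset Strict Implicit. Unset Printing Implicit Defensive.
Import numFieldNormedType.Exports.
Local Open Scope classical_set_scope.

Section Expi.
Variable R : realType.
Local Open Scope complex_scope.
Lemma expiD (a b : R) : expi (a + b) = expi a * expi b.
Proof.
rewrite /expi cosD sinD /=; simpc.
by congr (_ +i* _); rewrite addrC [sin a * _]mulrC [cos a * _]mulrC.
Qed.
Lemma expi0 : expi (0 : R) = 1.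
Proof. by rewrite /expi cos0 sin0. Qed.
Lemma norm_expi (a : R) : `|expi a| = 1.
Proof. by rewrite /expi; simpc; rewrite cos2Dsin2 sqrtr1. Qed.
Lemma expi_neq0 (a : R) : expi a != 0.
Proof. by rewrite -normr_eq0 norm_expi oner_eq0. Qed.
Lemma expiNV (a : R) : expi (- a) = (expi a)^-1.
Proof.
by rewrite -[LHS]mulr1 -(mulfV (expi_neq0 a)) mulrA -expiD addNr expi0 mul1r.
Qed.
Lemma expiXn (a : R) (n : nat) : expi a ^+ n = expi (n%:R * a).
Proof.
elim: n => [|n IH]; first by rewrite expr0 mul0r expi0.
by rewrite exprS IH -expiD mulrSr mulrDl mul1r addrC.
Qed.
Lemma expiXz (a : R) (k : int) : expi a ^ k = expi (k%:~R * a).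
Proof.
case: k => n; first by rewrite -exprnP expiXn.
rewrite NegzE -exprnN expiXn -expiNV; congr expi.
by rewrite mulrNz mulNr.
Qed.
End Expi.
Section Work.
Variable R : realType.

Definition RO : measurableType _ := g_sigma_algebraType (R.-ocitv.-measurable).
Definition U01 := (uniform_prob (@ltr01 R) : probability RO R).

Fixpoint TT (n : nat) : {d : measure_display & measurableType d} :=
  match n with
  | 0 => existT _ _ RO
  | n'.+1 => existT _ _ ((projT2 (TT n') * RO)%type : measurableType _)
  end.

Definition ST n := projT2 (TT n).

Fixpoint PP (n : nat) : probability (ST n) R :=
  match n as n0 return probability (ST n0) R with
  | 0 => U01
  | n'.+1 => ((PP n' \x U01)%E : probability _ R)
  end.

Fixpoint emb (n : nat) : ST n -> (nat -> R) :=
  match n as n0 return ST n0 -> (nat -> R) with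
  | 0 => fun _ _ => 0
  | n'.+1 => fun (xt : (ST n' * RO)%type) k => if k == n' then xt.2 else @emb n' xt.1 k
  end.

Arguments emb : clear implicits.

Lemma iter_intE n (g : (nat -> R) -> \bar R) :
  measurable_fun setT (g \o emb n) -> (forall x, 0 <= g x)%E ->
  iter_int n g = (\int[PP n]_x g (emb n x))%E.
Proof.
elim: n g => [|n IH] g mg g0 /=.
  by rewrite integral_cst //= probability_setT mule1.
rewrite (fubini_tonelli2 (fun xt => g (emb n.+1 xt))) //.
rewrite integral_uniform; first last.
- by move=> y; apply: integral_ge0 => x _.
- exact: (measurable_fun_fubini_tonelli_G (fun xt => g (emb n.+1 xt))).
rewrite subr0 invr1 mul1e.
apply: eq_integral => t _.
rewrite IH //.
exact: (measurable_fun_pair1 t mg).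
Qed.

Lemma torus_measureE n (A : set (nat -> R)) :
  measurable (emb n @^-1` A) -> torus_measure n A = PP n (emb n @^-1` A).
Proof.
move=> mA; rewrite /torus_measure iter_intE //.
- by rewrite -[X in PP n X]setIT -integral_indic.
- have h : measurable_fun setT (fun x => (\1_(emb n @^-1` A) x : R)%:E).
    by apply/measurable_EFinP; exact: measurable_indic.
  exact: h.
Qed.

Definition cmeas d (T : measurableType d) (f : T -> R[i]) :=
  measurable_fun setT (fun x => complex.Re (f x)) /\
  measurable_fun setT (fun x => complex.Im (f x)).

Section cmeas.
Context d (T : measurableType d).
Implicit Types f g : T -> R[i].

Lemma cmeas_ext f g : (forall x, f x = g x) -> cmeas f -> cmeas g.
Proof. by move=> fg; rewrite (funext fg). Qed.

Lemma cmeas_cst c : cmeas (fun _ : T => c).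
Proof. by split; exact: measurable_cst. Qed.

Lemma cmeas_add f g : cmeas f -> cmeas g -> cmeas (fun x => f x + g x).
Proof.
move=> [f1 f2] [g1 g2]; split.
  rewrite (_ : (fun x => _) = (fun x => complex.Re (f x)) \+ (fun x => complex.Re (g x))).
    exact: measurable_funD.
  by apply: funext => x /=; case: (f x) => ? ?; case: (g x).
rewrite (_ : (fun x => _) = (fun x => complex.Im (f x)) \+ (fun x => complex.Im (g x))).
  exact: measurable_funD.
by apply: funext => x /=; case: (f x) => ? ?; case: (g x).
Qed.

Lemma cmeas_mul f g : cmeas f -> cmeas g -> cmeas (fun x => f x * g x).
Proof.
move=> [f1 f2] [g1 g2]; split.
  rewrite (_ : (fun x => _) = ((fun x => complex.Re (f x)) \* (fun x => complex.Re (g x)))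
     \- ((fun x => complex.Im (f x)) \* (fun x => complex.Im (g x)))).
    by apply: measurable_funB; exact: measurable_funM.
  by apply: funext => x /=; case: (f x) => ? ?; case: (g x).
rewrite (_ : (fun x => _) = ((fun x => complex.Re (f x)) \* (fun x => complex.Im (g x)))
     \+ ((fun x => complex.Im (f x)) \* (fun x => complex.Re (g x)))).
  by apply: measurable_funD; exact: measurable_funM.
by apply: funext => x /=; case: (f x) => ? ?; case: (g x).
Qed.

Lemma cmeas_sum I (r : seq I) (P : pred I) (F : I -> T -> R[i]) :
  (forall i, cmeas (F i)) -> cmeas (fun x => \sum_(i <- r | P i) F i x).
Proof.
move=> hF; elim: r => [|i r IH].
  by apply: (cmeas_ext (fun x => esym (big_nil _ _ _ _))); exact: cmeas_cst.
apply: (@cmeas_ext (fun x => if P i then F i x + \sum_(j <- r | P j) F j x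
  else \sum_(j <- r | P j) F j x)); first by move=> x; rewrite big_cons.
by case: (P i) => //; exact: cmeas_add.
Qed.

Lemma cmeas_prod I (r : seq I) (P : pred I) (F : I -> T -> R[i]) :
  (forall i, cmeas (F i)) -> cmeas (fun x => \prod_(i <- r | P i) F i x).
Proof.
move=> hF; elim: r => [|i r IH].
  by apply: (cmeas_ext (fun x => esym (big_nil _ _ _ _))); exact: cmeas_cst.
apply: (@cmeas_ext (fun x => if P i then F i x * \prod_(j <- r | P j) F j x
  else \prod_(j <- r | P j) F j x)); first by move=> x; rewrite big_cons.
by case: (P i) => //; exact: cmeas_mul.
Qed.

Lemma cmeas_expi (psi : T -> R) : measurable_fun setT psi ->
  cmeas (fun x => expi (psi x)).
Proof.
move=> mpsi; split => /=.
  exact: (measurableT_comp (continuous_measurable_fun (@continuous_cos R)) mpsi).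
exact: (measurableT_comp (continuous_measurable_fun (@continuous_sin R)) mpsi).
Qed.

Lemma cmeas_expiz (psi : T -> R) (k : int) : measurable_fun setT psi ->
  cmeas (fun x => expi (psi x) ^ k).
Proof.
move=> mpsi; apply: (cmeas_ext (fun x => esym (expiXz _ _))).
apply: cmeas_expi; apply: measurable_funM => //; exact: measurable_cst.
Qed.

Lemma cmeas_zero f : cmeas f -> measurable [set x | f x = 0].
Proof.
move=> [f1 f2].
rewrite (_ : [set x | f x = 0] = ((fun x => complex.Re (f x)) @^-1` [set 0]) `&`
   ((fun x => complex.Im (f x)) @^-1` [set 0])).
  apply: measurableI.
    by rewrite -[X in measurable X]setTI; apply: f1 => //; exact: measurable_set1.
  by rewrite -[X in measurable X]setTI; apply: f2 => //; exact: measurable_set1.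
apply/seteqP; split => x /=.
  by move=> ->.
by case: (f x) => a b /= [-> ->].
Qed.

End cmeas.

Lemma meas_emb n i : measurable_fun setT (fun x : ST n => emb n x i).
Proof.
elim: n => [|n IH] /=; first exact: measurable_cst.
case: (i == n); first exact: measurable_snd.
exact: (measurableT_comp IH measurable_fst).
Qed.

End Work.
Arguments emb {R} n _ _.
Arguments PP {R} n.
Arguments ST {R} n.
Arguments TT {R} n.

Section P2.
Variable R : realType.
Local Notation RO := (RO R).
Local Notation U01 := (U01 R).

Lemma expi_inj (t1 t2 : R) : 0 <= t1 < 1 -> 0 <= t2 < 1 ->
  expi (2 * pi * t1) = expi (2 * pi * t2) -> t1 = t2.
Proof.
wlog: t1 t2 / t1 <= t2.
  move=> H h1 h2 e; case: (lerP t1 t2) => [le|/ltW le]; first exact: H.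
  exact/esym/(H t2 t1).
move=> le /andP[h10 h11] /andP[h20 h21] e.
set u := t2 - t1.
have he : expi (2 * pi * u) = 1.
  by rewrite /u mulrBr expiD expiNV e mulfV // expi_neq0.
have hc : cos (2 * pi * u) = 1 by have := congr1 (@complex.Re R) he.
have hs : sin (pi * u) = 0.
  have h2 := cos2Dsin2 (pi * u).
  have : 2 * pi * u = pi * u + pi * u by ring.
  move=> h; rewrite h cosD in hc.
  have : sin (pi * u) ^+ 2 = 0 by rewrite !expr2; lra.
  by move/eqP; rewrite sqrf_eq0 => /eqP.
have u0 : u = 0.
  apply/eqP; rewrite eq_le; apply/andP; split; last by rewrite /u subr_ge0.
  rewrite leNgt; apply/negP => u0.
  have : 0 < pi * u < pi.
    have pi0 := @pi_gt0 R; apply/andP; split; first by rewrite mulr_gt0.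
    have : u < 1 by rewrite /u; lra.
    nra.
  by move/sin_gt0_pi; rewrite hs ltxx.
by move: u0; rewrite /u => /eqP; rewrite subr_eq0 => /eqP.
Qed.


Lemma meas_2pit : measurable_fun (setT : set RO) (fun t : RO => 2 * pi * (t : R)).
Proof. apply: measurable_funM; [exact: measurable_cst | exact: measurable_id]. Qed.

Lemma U01_I (A : set RO) : U01 A = U01 (A `&` `[0%R, 1%R]).
Proof.
by rewrite /= /uniform_prob integral_uniform_pdf [RHS]integral_uniform_pdf -setIA setIid.
Qed.

Lemma trig1_null (I : eqType) (s : seq I) (b : I -> R[i]) (e : I -> int) (e0 : int) :
  \sum_(j <- s | e j == e0) b j != 0 ->
  U01 [set t : RO | \sum_(j <- s) b j * expi (2 * pi * t) ^ e j = 0] = 0%E.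
Proof.
move=> hb.
set Zt := [set t : RO | _].
have mZ : measurable Zt.
  apply: cmeas_zero; apply: cmeas_sum => j; apply: cmeas_mul; first exact: cmeas_cst.
  exact: cmeas_expiz meas_2pit.
have mK : measurable (Zt `&` `[0%R, 1%R]).
  by apply: measurableI => //; exact: measurable_itv.
rewrite U01_I; apply/(measure0_null_setP _ mK).1.
apply: dominates_uniform_prob.
apply/measure0_null_setP => //.
apply: countable_lebesgue_measure0.
pose M : nat := (`|e0| + \sum_(j <- s) `|e j|)%N.
have eM j : j \in s -> 0 <= e j + M%:Z.
  move=> js; have : (`|e j| <= M)%N.
    by rewrite /M (big_rem j) //= addnCA leq_addr.
  move=> h; lia.
have e0M : 0 <= e0 + M%:Z.
  have : (`|e0| <= M)%N by rewrite /M leq_addr.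
  move=> h; lia.
pose Q : {poly R[i]} := \sum_(j <- s) b j *: 'X^(absz (e j + M%:Z)).
have Q0 : Q != 0.
  apply/eqP => /(congr1 (fun p : {poly R[i]} => p`_(absz (e0 + M%:Z)))).
  rewrite coef0 /Q coef_sum.
  under eq_bigr do rewrite coefZ coefXn.
  move=> h; move/negP: hb; apply; apply/eqP; rewrite -[RHS]h.
  rewrite big_mkcond [RHS]big_seq [LHS]big_seq; apply: eq_bigr => j js.
  have -> : (absz (e0 + M%:Z) == absz (e j + M%:Z)) = (e j == e0).
    apply/eqP/eqP => [h'|->] //.
    have := congr1 Posz h'; rewrite !gez0_abs //; last exact: eM.
    by move/addIr.
  by case: eqP; rewrite ?mulr1 ?mulr0.
have [r hr] := closed_field_poly_normal Q.
have lc0 : lead_coef Q != 0 by rewrite lead_coef_eq0.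
have inr t : Zt t -> expi (2 * pi * t) \in r.
  move=> Zt_t; rewrite -root_prod_XsubC.
  have : root Q (expi (2 * pi * t)).
    rewrite /root /Q horner_sum.
    set z := expi _.
    have -> : \sum_(j <- s) (b j *: 'X^(absz (e j + M%:Z))).[z] =
        (\sum_(j <- s) b j * z ^ e j) * z ^ (M%:Z).
      rewrite big_distrl /= big_seq [RHS]big_seq; apply: eq_bigr => j js.
      rewrite hornerZ hornerXn -mulrA -expfzDr ?expi_neq0 // exprnP gez0_abs //.
      exact: eM.
    by rewrite Zt_t mul0r.
  by rewrite hr rootZ.
apply/countable_injP.
exists (fun t : R => if t == 1 then 0%N else (index (expi (2 * pi * t)) r).+1).
move=> t1 t2 /set_mem [Z1 I1] /set_mem [Z2 I2].
move: I1 I2; rewrite /= !in_itv /= => /andP[t10 t11] /andP[t20 t21].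
case: eqP => [->|/eqP n1]; case: eqP => [->|/eqP n2] //.
move=> [] hi.
apply: expi_inj.
- by rewrite t10 lt_neqAle n1 t11.
- by rewrite t20 lt_neqAle n2 t21.
by rewrite -(nth_index 0 (inr _ Z1)) hi nth_index //; exact: inr.
Qed.

End P2.

Unset Implicit Arguments.
Section P3.
Variable R : realType.
Local Notation RO := (RO R).
Local Notation U01 := (U01 R).
Local Notation ST := (@ST R).

Definition E n (k : nat -> int) (x : ST n) : R[i] :=
  \prod_(i < n) expi (2 * pi * emb n x i) ^ (k i).

Definition TP {I : eqType} n (s : seq I) (a : I -> R[i]) (k : I -> nat -> int)
  (x : ST n) : R[i] := \sum_(j <- s) a j * E n (k j) x.

Definition eqk n (k1 k2 : nat -> int) := [forall i : 'I_n, k1 i == k2 i].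

Lemma cmeas_TP (I : eqType) n s a (k : I -> nat -> int) : cmeas (TP n s a k).
Proof.
apply: cmeas_sum => j; apply: cmeas_mul; first exact: cmeas_cst.
apply: cmeas_prod => i; apply: cmeas_expiz.
by apply: measurable_funM; [exact: measurable_cst | exact: meas_emb].
Qed.

Lemma emb_S n (y : ST n) (t : RO) i :
  emb n.+1 ((y, t) : ST n.+1) i = if i == n then t else emb n y i.
Proof. by []. Qed.

Lemma E_S n k (y : ST n) (t : RO) :
  E n.+1 k ((y, t) : ST n.+1) = E n k y * expi (2 * pi * t) ^ (k n).
Proof.
rewrite /E big_ord_recr.
rewrite (eq_bigr (fun i : 'I_n => expi (2 * pi * emb n y i) ^ k i)); last first.
  move=> i _; rewrite emb_S; case: ifP => [/eqP h|_].
    have h' : (i : nat) = n := h.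
    by exfalso; move: (ltn_ord i); rewrite h' (ltnn n).
  by rewrite (_ : (widen_ord (leqnSn n) i : nat) = i).
rewrite (emb_S n y t ord_max).
have -> : (@ord_max n : nat) = n by [].
rewrite (eqxx n).
exact: erefl.
Qed.

Lemma eqkS n k1 k2 : eqk n.+1 k1 k2 = eqk n k1 k2 && (k1 n == k2 n).
Proof.
apply/forallP/andP => [h|[/forallP h1 h2] i].
  split; last exact: (h ord_max).
  by apply/forallP => i; exact: (h (widen_ord (leqnSn n) i)).
have [lt|] := ltnP i n; first exact: (h1 (Ordinal lt)).
by move=> ge; have -> : (i : nat) = n by apply/eqP; rewrite eqn_leq ge -ltnS ltn_ord.
Qed.

Lemma Znull n (I : eqType) (s : seq I) a (k : I -> nat -> int) j0 :
  j0 \in s -> \sum_(j <- s | eqk n (k j) (k j0)) a j != 0 ->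
  PP n [set x | TP n s a k x = 0] = 0%E.
Proof.
elim: n s j0 => [|n IH] s j0 j0s hnz.
  rewrite (_ : [set x | _] = set0) ?measure0 //.
  apply/seteqP; split => x //= h; move: hnz; rewrite (eq_bigl xpredT); last first.
    by move=> j; apply/forallP => -[].
  have hE j : E 0 (k j) x = 1 by rewrite /E big_ord0.
  move: h; rewrite /TP (eq_bigr (fun j => a j)); last by move=> j _; rewrite hE mulr1.
  by move=> ->; rewrite eqxx.
set N := [set x | TP n.+1 s a k x = 0].
have mN : measurable N by apply: cmeas_zero; exact: cmeas_TP.
set s' := [seq j <- s | k j n == k j0 n].
set B := [set y : ST n | TP n s' a k y = 0].
have mB : measurable B by apply: cmeas_zero; exact: cmeas_TP.
have B0 : PP n B = 0%E.
  apply: (IH _ j0); first by rewrite mem_filter eqxx.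
  rewrite big_filter_cond (eq_bigl (fun j => eqk n.+1 (k j) (k j0))) //.
  by move=> j; rewrite eqkS andbC.
rewrite /= /product_measure1.
apply: le_anti; apply/andP; split; last by apply: integral_ge0.
apply: (@le_trans _ _ (\int[PP n]_y (\1_B y)%:E)%E).
  apply: ge0_le_integral => //.
  - exact: measurable_fun_xsection.
  - exact/measurable_EFinP/measurable_indic.
  move=> y _ /=; rewrite indicE; case: (boolP (y \in B)) => yB.
    exact: probability_le1 (measurable_xsection _ mN).
  rewrite (_ : xsection N y = [set t : RO | \sum_(j <- s)
      (a j * E n (k j) y) * expi (2 * pi * t) ^ (k j n) = 0]).
    rewrite (@trig1_null _ _ _ _ _ (k j0 n)); first by rewrite lee_fin.
    move: yB; rewrite notin_setE => yB; apply/eqP => h; apply: yB.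
    change (TP n s' a k y = 0); rewrite /TP /s' big_filter; exact: h.
  rewrite /xsection; apply/funext => t; apply/propext; rewrite /mkset; cbv beta.
  rewrite in_setE /N /TP.
  change (\sum_(j <- s) a j * E n.+1 (k j) ((y, t) : ST n.+1) = 0 <->
    \sum_(j <- s) a j * E n (k j) y * expi (2 * pi * t) ^ k j n = 0).
  rewrite (eq_bigr (fun j => a j * E n (k j) y * expi (2 * pi * t) ^ k j n)).
    by [].
  by move=> j _; rewrite E_S mulrA.
rewrite integral_indic // setIT.
by move/eqP: B0; rewrite eq_le => /andP[].
Qed.

End P3.

Unset Implicit Arguments.
Section P4.
Variable R : realType.
Variable m : nat.
Variable D : {fset 'rV[int]_m}.
Local Notation ST := (@ST R).

Definition F (c : 'rV[int]_m -> R[i]) (x : ST m) : R[i] :=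
  laurent_eval D c (torus_pt (emb m x)).

Lemma cmeas_F c : cmeas (F c).
Proof.
apply: cmeas_sum => d; apply: cmeas_mul; first exact: cmeas_cst.
apply: cmeas_prod => k; apply: cmeas_expiz.
by apply: measurable_funM; [exact: measurable_cst | exact: meas_emb].
Qed.

Lemma cmeas_neg d (T : measurableType d) (f : T -> R[i]) : cmeas f ->
  measurable [set x | f x < 0].
Proof.
move=> [f1 f2].
rewrite (_ : [set x | f x < 0] = ((fun x => complex.Im (f x)) @^-1` [set 0]) `&`
   ((fun x => complex.Re (f x)) @^-1` `]-oo, 0[)).
  apply: measurableI.
    by rewrite -[X in measurable X]setTI; apply: f2 => //; exact: measurable_set1.
  by rewrite -[X in measurable X]setTI; apply: f1 => //; exact: measurable_itv.
apply/seteqP; split => x /=; rewrite ltcE /= in_itv /=.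
  by case/andP => /eqP h1 h2.
by move=> [-> ->]; rewrite eqxx.
Qed.

Lemma rho_negE c : rho_neg D c = PP m [set x | F c x < 0].
Proof.
rewrite /rho_neg torus_measureE //.
have h := @cmeas_neg _ _ _ (cmeas_F c).
exact: h.
Qed.


Lemma conj_expi (a : R) : ((expi a)^*)%C = expi (- a).
Proof. by rewrite /expi /= cosN sinN. Qed.

Definition w (d : 'rV[int]_m) (x : ST m) : R[i] :=
  \prod_(k < m) torus_pt (emb m x) k ^ (d ord0 k).

Lemma conj_w d x : ((w d x)^*)%C = w (- d) x.
Proof.
rewrite /w rmorph_prod; apply: eq_bigr => k _.
rewrite /torus_pt !expiXz.
transitivity (expi (- ((d ord0 k)%:~R * (2 * pi * emb m x k)))).
  exact: conj_expi.
by rewrite mxE mulrNz mulNr.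
Qed.

Lemma norm_w d x : `|w d x| = 1.
Proof.
rewrite /w normr_prod big1 // => k _.
by rewrite /torus_pt expiXz norm_expi.
Qed.

Lemma F_sum c x : F c x = \sum_(d <- D) c d * w d x.
Proof. by []. Qed.

Hypothesis hDsym : forall d, d \in D -> - d \in D.

Lemma sum_opp (f : 'rV[int]_m -> R[i]) :
  \sum_(d <- D) f (- d) = \sum_(d <- D) f d.
Proof.
rewrite -(big_map (fun d => - d) xpredT f).
apply: perm_big; apply: uniq_perm.
- by rewrite map_inj_uniq ?fset_uniq //; exact: oppr_inj.
- exact: fset_uniq.
move=> d; rewrite -{1}(opprK d) (mem_map oppr_inj).
apply/idP/idP => h; first by rewrite -(opprK d); exact: hDsym.
exact: hDsym.
Qed.

Lemma Im_F c x : in_FD D c -> complex.Im (F c x) = 0.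
Proof.
move=> [hc1 _].
have h : ((F c x)^*)%C = F c x.
  rewrite F_sum rmorph_sum.
  rewrite (eq_big_seq (fun d => c (- d) * w (- d) x)); last first.
    move=> d dD; rewrite rmorphM; congr (_ * _).
      exact: (esym (hc1 d dD)).
    exact: conj_w.
  exact: (sum_opp (fun d => c d * w d x)).
move: h; case: (F c x) => a b /= [] h.
have : b + b = 0 by rewrite -[in X in X + _ = _]h addNr.
rewrite -mulr2n => /eqP; rewrite mulrn_eq0 /= => /eqP.
by [].
Qed.


Lemma Re_diff c c' x delta : (forall d, d \in D -> `|c' d - c d| < delta%:C%C) ->
  `|complex.Re (F c' x) - complex.Re (F c x)| <= delta *+ size D.
Proof.
move=> h.
have hw : F c' x - F c x = \sum_(d <- D) (c' d - c d) * w d x.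
  by rewrite !F_sum -sumrB; apply: eq_bigr => d _; rewrite mulrBl.
have hRe : complex.Re (F c' x) - complex.Re (F c x) = complex.Re (F c' x - F c x).
  by case: (F c' x) => ? ?; case: (F c x).
rewrite hRe.
have h1 : `|F c' x - F c x| <= (delta *+ size D)%:C%C.
  rewrite hw; apply: (le_trans (ler_norm_sum _ _ _)).
  apply: (@le_trans _ _ (\sum_(d <- D) delta%:C%C)).
    rewrite big_seq [X in _ <= X]big_seq; apply: ler_sum => d dD.
    by rewrite normrM norm_w mulr1; exact: ltW (h d dD).
  by rewrite big_const_seq count_predT iter_addr_0 rmorphMn.
have h2 := normc_ge_Re (F c' x - F c x).
by have := le_trans h2 h1; rewrite lecR.
Qed.

Lemma null_zero c : in_FD D c -> PP m [set x | complex.Re (F c x) = 0] = 0%E.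
Proof.
move=> hc.
pose kap (d : 'rV[int]_m) (j : nat) : int :=
  if (insub j : option 'I_m) is Some k then d ord0 k else 0.
have hk d (k : 'I_m) : kap d k = d ord0 k by rewrite /kap valK.
have eqF x : F c x = @TP R _ m D c kap x.
  rewrite F_sum /TP; apply: eq_bigr => d _; congr (_ * _).
  rewrite /w /E; apply: eq_bigr => k _; rewrite /torus_pt hk.
  exact: erefl.
have -> : [set x | complex.Re (F c x) = 0] = [set x | @TP R _ m D c kap x = 0].
  apply/seteqP; split => x /=; rewrite -eqF.
    move=> h; have hI := Im_F c x hc; move: h hI.
    case: (F c x) => a b /= -> ->.
    by apply/eqP; rewrite eq_complex /=; apply/andP; split; apply/eqP.
  by move=> ->.
have [j0 j0D cj0] : exists2 j0, j0 \in D & c j0 != 0.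
  case: (pselect (exists2 j0, j0 \in D & c j0 != 0)) => // hno.
  exfalso; case: hc => _; rewrite big_seq big1.
    by move/eqP; rewrite eq_sym oner_eq0.
  move=> d dD; have -> : c d = 0.
    by case: (eqVneq (c d) 0) => // hd; exfalso; apply: hno; exists d.
  by rewrite normr0 expr0n.
apply: (@Znull R m _ D c kap j0) => //.
rewrite (eq_bigl (fun d => d == j0)).
  by rewrite -big_filter filter_pred1_uniq ?fset_uniq // big_seq1.
move=> d; apply/idP/idP => [/forallP h|/eqP ->]; last first.
  by apply/forallP => k; rewrite eqxx.
apply/eqP/rowP => k; have := h k; rewrite !hk => /eqP.
exact.
Qed.

End P4.


Lemma natSinv_lt (R : realType) (r : R) : 0 < r -> exists n : nat, n.+1%:R^-1 < r.
Proof.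
move=> hr.
have [N _ hN] := @near_infty_natSinv_lt R (PosNum hr).
by exists N; exact: (hN N (leqnn N)).
Qed.

Theorem lemma2 (R : realType) (m : nat) (D : {fset 'rV[int]_m})
  (hD0 : (0 : 'rV[int]_m) \notin D)
  (hDsym : forall d, d \in D -> - d \in D) :
  forall c : 'rV[int]_m -> R[i], in_FD D c ->
  forall e : R, 0 < e ->
  exists2 delta : R, 0 < delta &
    forall c' : 'rV[int]_m -> R[i], in_FD D c' ->
      (forall d, d \in D -> `|c' d - c d| < (delta%:C)%C) ->
      (`|rho_neg D c' - rho_neg D c| < e%:E)%E.
Proof.
move=> c hc e e0.
pose G (c0 : 'rV[int]_m -> R[i]) (x : ST m) := complex.Re (F R m D c0 x).
have mG c0 : measurable_fun setT (G c0) := (cmeas_F R m D c0).1.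
pose B (n : nat) := [set x : ST m | `|G c x| <= n.+1%:R^-1].
have mB n : measurable (B n).
  rewrite (_ : B n = (fun x => `|G c x|) @^-1` `]-oo, n.+1%:R^-1]); last first.
    by apply/seteqP; split => x /=; rewrite in_itv /=.
  rewrite -[X in measurable X]setTI.
  have h := measurableT_comp (@normr_measurable R setT) (mG c).
  by apply: h => //; exact: measurable_itv.
have Bcap : \bigcap_n B n = [set x | G c x = 0].
  apply/seteqP; split => x /=.
    move=> h; apply/eqP; rewrite -normr_eq0; apply/negPn/negP => hx.
    have hx' : 0 < `|G c x| by rewrite lt_def hx normr_ge0.
    have [n hn] := @natSinv_lt R _ hx'.
    by have := h n I; rewrite /B /= leNgt hn.
  by move=> h n _; rewrite /B /= h normr0 invr_ge0 ler0n.
have B0 : PP m (\bigcap_n B n) = 0%E by rewrite Bcap; exact: null_zero.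
have hdec : {homo B : n k / (n <= k)%N >-> (k <= n)%O}.
  move=> n k nk; apply/subsetPset => x; rewrite /B /= => h; apply: (le_trans h).
  by rewrite lef_pV2 ?posrE ?ltr0Sn // ler_nat ltnS.
have finP (X : set (ST m)) : measurable X -> @PP R m X \is a fin_num.
  move=> mX; rewrite ge0_fin_numE ?measure_ge0 //.
  by apply: (le_lt_trans (probability_le1 _ mX)); exact: ltry.
have hcv := @nonincreasing_cvg_mu _ _ _ (PP m) B
  (le_lt_trans (probability_le1 _ (mB 0%N)) (ltry _)) mB (bigcapT_measurable mB) hdec.
have hcv0 : (PP m \o B) x @[x --> \oo] --> (0%:E : \bar R).
  exact: (eq_ind _ (fun v => (PP m \o B) x @[x --> \oo] --> v) hcv _ B0).
have [n hn] : exists n, (PP m (B n) < e%:E)%E.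
  move/fine_cvgP: hcv0 => [_ hcv'].
  have [N _ hN] := cvgr_lt _ hcv' _ e0.
  exists N; have := hN N (leqnn N); rewrite /= -lte_fin fineK //.
  exact: finP.
pose eta : R := n.+1%:R^-1.
have eta0 : 0 < eta by rewrite invr_gt0 ltr0Sn.
exists (eta / (size D).+1%:R); first by rewrite divr_gt0 // ltr0Sn.
move=> c' hc' hd.
rewrite !(rho_negE R m D).
set A := [set x | F R m D c x < 0].
set A' := [set x | F R m D c' x < 0].
have mA : measurable A := @cmeas_neg R _ _ _ (cmeas_F R m D c).
have mA' : measurable A' := @cmeas_neg R _ _ _ (cmeas_F R m D c').
have hAc x : (F R m D c x < 0) = (G c x < 0).
  by rewrite ltcE /= (Im_F R m D hDsym c x hc) eqxx.
have hAc' x : (F R m D c' x < 0) = (G c' x < 0).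
  by rewrite ltcE /= (Im_F R m D hDsym c' x hc') eqxx.
have hb x : `|G c' x - G c x| < eta.
  apply: (le_lt_trans (Re_diff R m D c c' x _ hd)).
  set s := size D.
  have hs : (s%:R : R) < s.+1%:R by rewrite ltr_nat ltnSn.
  have hs0 : (0 : R) < s.+1%:R by rewrite ltr0Sn.
  rewrite -[X in X < _]mulr_natr mulrAC ltr_pdivrMr // ltr_pM2l //.
have s1 : A' `<=` A `|` B n.
  move=> x; rewrite /A' /A /B /= hAc hAc' => hx.
  case: (ltP (G c x) 0) => h; [by left | right].
  rewrite ger0_norm //; have := hb x; rewrite ltr_norml => /andP[h1 h2].
  rewrite -/eta; lra.
have s2 : A `<=` A' `|` B n.
  move=> x; rewrite /A' /A /B /= hAc hAc' => hx.
  case: (ltP (G c' x) 0) => h; [by left | right].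
  rewrite ltr0_norm //; have := hb x; rewrite ltr_norml => /andP[h1 h2].
  rewrite -/eta; lra.
have le1 : (PP m A' <= PP m A + PP m (B n))%E.
  apply: le_trans (measureU2 _ mA (mB n)).
  by apply: le_measure => //; rewrite inE //; exact: measurableU.
have le2 : (PP m A <= PP m A' + PP m (B n))%E.
  apply: le_trans (measureU2 _ mA' (mB n)).
  by apply: le_measure => //; rewrite inE //; exact: measurableU.
move: le1 le2 hn.
rewrite -(fineK (finP _ mA)) -(fineK (finP _ mA')) -(fineK (finP _ (mB n))).
rewrite -EFinB abse_EFin lte_fin -!EFinD !lee_fin !lte_fin => h1 h2 h3.
rewrite ltr_norml; apply/andP; split; lra.
Qed.
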